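(* Let $L$ be a sublattice of $A_n$ of rank $n$ and $D\in\mathbb Z^{n+1}$. (i) $r(D)=-1$ if and only if $-D\in\Sigma(L)$. (ii) $r(D)=\min\{\|p+D\|_{\ell_1}: p\in\Sigma(L)\}-1$, where $\|x\|_{\ell_1}=\sum_i|x_i|$.
   Context: Let $n\ge 1$, $H_0=\{x\in\mathbb R^{n+1}:\sum_i x_i=0\}$ and $A_n=H_0\cap\mathbb Z^{n+1}$. For $x\in\mathbb R^{n+1}$, $\deg(x)=\sum_i x_i$. Write $x\le y$ iff $x_i\le y_i$ for all $i$. For a sublattice $L\subseteq A_n$ of rank $n$ and $D\in\mathbb Z^{n+1}$: $|D|=\{E\in\mathbb Z^{n+1}:E\ge 0,\ D-E\in L\}$; $r(D)=-1$ if $|D|=\emptyset$, and otherwise $r(D)=\min\{\deg(E):E\in\mathbb Z^{n+1},E\ge0,|D-E|=\emptyset\}-1$. The Sigma-Region is $\Sigma(L)=\{D\in\mathbb Z^{n+1}: D\not\le p \text{ for all } p\in L\}$. *)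

(* Defs.v *)
From HB Require Import structures.
From mathcomp Require Import all_boot all_order all_algebra.
From Stdlib Require Import ClassicalEpsilon.
Set Implicit Arguments. Unset Strict Implicit. Unset Printing Implicit Defensive.
Import Order.TTheory GRing.Theory Num.Theory.
Local Open Scope ring_scope.

Section Defs.
Variable n : nat.
Local Notation vec := 'rV[int]_(n.+1).

Definition deg (x : vec) : int := \sum_(i < n.+1) x ord0 i.

Definition vle (x y : vec) : Prop := forall i : 'I_n.+1, x ord0 i <= y ord0 i.

Definition l1norm (x : vec) : int := \sum_(i < n.+1) `|x ord0 i|.

(* L is a sublattice of A_n = H_0 ∩ Z^{n+1} of rank n:
   a subgroup of Z^{n+1} contained in H_0, containing n vectors that are
   linearly independent (over Q). *)
Definition An_sublattice_rank_n (L : vec -> Prop) : Prop :=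
  [/\ L 0,
      (forall x y, L x -> L y -> L (x - y)),
      (forall x, L x -> deg x = 0) &
      exists M : 'M[int]_(n, n.+1),
        (forall i, L (row i M)) /\
        \rank (map_mx (fun z : int => z%:~R : rat) M) = n].

Definition linsys (L : vec -> Prop) (D : vec) (E : vec) : Prop :=
  vle 0 E /\ L (D - E).

Definition linsys_empty (L : vec -> Prop) (D : vec) : Prop :=
  forall E, ~ linsys L D E.

(* the minimum of a set of integers (classical choice; meaningful when the
   minimum exists) *)
Definition intmin (P : int -> Prop) : int :=
  epsilon (inhabits 0) (fun m => P m /\ forall k, P k -> m <= k).

Definition rankD (L : vec -> Prop) (D : vec) : int :=
  if excluded_middle_informative (linsys_empty L D) then -1
  else intmin (fun k => exists E : vec,
                  [/\ vle 0 E, linsys_empty L (D - E) & deg E = k]) - 1.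

Definition inSigma (L : vec -> Prop) (D : vec) : Prop :=
  forall p, L p -> ~ vle D p.

End Defs.

(* Main.v *)
Require Import Defs.
From HB Require Import structures.
From mathcomp Require Import all_boot all_order all_algebra.
From Stdlib Require Import Classical ClassicalEpsilon.
Import Order.TTheory GRing.Theory Num.Theory.
Local Open Scope ring_scope.

Lemma nat_min (Q : nat -> Prop) : (exists m, Q m) ->
  exists m, Q m /\ forall k, Q k -> (m <= k)%N.
Proof.
move=> [m Qm].
suff: forall N m, (m <= N)%N -> Q m -> exists m, Q m /\ forall k, Q k -> (m <= k)%N.
  by move=> /(_ m m (leqnn m) Qm).
elim=> [|N IH] {}m hm {}Qm.
  exists m; split=> // k _; move: hm; rewrite leqn0 => /eqP ->; done.
case: (classic (exists k, Q k /\ (k < m)%N)) => [[k [Qk hk]]|H].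
  apply: (IH k) => //; rewrite -ltnS; exact: leq_trans hk hm.
exists m; split=> // k Qk; rewrite leqNgt; apply/negP => hk; apply: H; by exists k.
Qed.

Lemma intmin_spec (P : int -> Prop) : (exists k, P k) -> (forall k, P k -> 0 <= k) ->
  P (intmin P) /\ forall k, P k -> intmin P <= k.
Proof.
move=> [k Pk] hpos.
have [m [Qm hm]] : exists m : nat, P m%:Z /\ forall k : nat, P k%:Z -> (m <= k)%N.
  apply: nat_min. have := hpos _ Pk. case: k Pk => // k Pk _. by exists k.
rewrite /intmin; apply: (epsilon_spec (inhabits 0) (fun m => P m /\ forall k, P k -> m <= k)).
exists m%:Z; split=> // j Pj.
have := hpos _ Pj. case: j Pj => // j Pj _. rewrite lez_nat. exact: hm.
Qed.

Section S.
Variable n : nat.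
Local Notation vec := 'rV[int]_(n.+1).

Lemma degD (x y : vec) : deg (x + y) = deg x + deg y.
Proof. rewrite /deg -big_split /=; apply: eq_bigr => i _; by rewrite mxE. Qed.
Lemma degN (x : vec) : deg (- x) = - deg x.
Proof. rewrite /deg -sumrN; apply: eq_bigr => i _; by rewrite mxE. Qed.
Lemma degB (x y : vec) : deg (x - y) = deg x - deg y.
Proof. by rewrite degD degN. Qed.
Lemma deg_ge0 (x : vec) : vle 0 x -> 0 <= deg x.
Proof. move=> h; apply: sumr_ge0 => i _; have := h i; by rewrite mxE. Qed.
Lemma l1_deg (x : vec) : vle 0 x -> l1norm x = deg x.
Proof. move=> h; apply: eq_bigr => i _; apply: ger0_norm; have := h i; by rewrite mxE. Qed.

Variable L : vec -> Prop.
Hypothesis HL0 : L 0.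
Hypothesis HLB : forall x y, L x -> L y -> L (x - y).
Hypothesis HLdeg : forall x, L x -> deg x = 0.

Lemma LN x : L x -> L (- x).
Proof. by move=> h; have := @HLB 0 x HL0 h; rewrite sub0r. Qed.

Lemma empty_sigma D : linsys_empty L D <-> inSigma L (- D).
Proof.
split.
- move=> He p Lp hle; apply: (He (D + p)); split.
    move=> i; have := hle i; rewrite !mxE => h.
    by rewrite addrC -(opprK (D ord0 i)) subr_ge0.
  rewrite opprD addrA subrr add0r; exact: LN.
- move=> hS E [hE hL]; apply: (hS (- (D - E))); first exact: LN.
  move=> i; rewrite !mxE; have := hE i; rewrite mxE => h.
  by rewrite opprB lerDr.
Qed.

End S.

Theorem lemma2p1 (n : nat) (L : 'rV[int]_(n.+1) -> Prop) (D : 'rV[int]_(n.+1)) :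
  (0 < n)%N -> An_sublattice_rank_n L ->
  (rankD L D = -1 <-> inSigma L (- D)) /\
  rankD L D = intmin (fun k => exists p, inSigma L p /\ l1norm (p + D) = k) - 1.
Proof.
move=> _ [HL0 HLB HLdeg _].
set R := intmin _.
have Hes := @empty_sigma n L HL0 HLB.
have RHSge0 : forall k, (exists p, inSigma L p /\ l1norm (p + D) = k) -> 0 <= k.
  move=> k [p [_ <-]]; apply: sumr_ge0 => i _; exact: normr_ge0.
rewrite /rankD; case: excluded_middle_informative => [He|Hne].
  have l10 : l1norm (- D + D) = 0.
    by rewrite addNr /l1norm big1 // => i _; rewrite mxE normr0.
  have ex0 : exists p, inSigma L p /\ l1norm (p + D) = 0.
    by exists (-D); split=> //; apply: (Hes D).1.
  have [hR1 hR2] := @intmin_spec _ (ex_intro _ 0 ex0) RHSge0.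
  split; first by split=> // _; apply: (Hes D).1.
  have h1 : R <= 0 := hR2 0 ex0.
  have h2 := RHSge0 _ hR1.
  have -> : R = 0 by apply/le_anti; rewrite h1 h2.
  by [].
set P := fun k => _.
have Pge0 : forall k, P k -> 0 <= k.
  by move=> k [E [hE _ <-]]; apply: deg_ge0.
have Pex : exists k, P k.
  set c : int := `|deg D| + 1.
  exists (deg (const_mx c : 'rV[int]_(n.+1))), (const_mx c); split=> //.
    by move=> i; rewrite !mxE addr_ge0.
  move=> F [hF hL]; have := HLdeg _ hL; rewrite !degB.
  have hc : deg D < deg (const_mx c : 'rV[int]_(n.+1)).
    have -> : deg (const_mx c : 'rV[int]_(n.+1)) = c *+ n.+1.
      rewrite /deg (eq_bigr (fun=> c)) ?sumr_const ?card_ord // => i _.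
      by rewrite mxE.
    rewrite mulrSr.
    apply: (lt_le_trans (y := c)).
      by rewrite /c ltr_pwDr // ler_norm.
    by rewrite lerDr mulrn_wge0 // addr_ge0.
  have := @deg_ge0 _ F hF => hF0 h.
  have : deg D - deg (const_mx c : 'rV[int]_(n.+1)) - deg F < 0.
    apply: (le_lt_trans (y := deg D - deg (const_mx c : 'rV[int]_(n.+1)))).
      by rewrite lerBlDr lerDl.
    by rewrite subr_lt0.
  by rewrite h ltxx.
have [hP1 hP2] := @intmin_spec _ Pex Pge0.
move: (hP1) => [E [hE hEe hdeg]].
have hEs : inSigma L (E - D).
  by have := (Hes _).1 hEe; rewrite opprB.
have l1E : l1norm (E - D + D) = deg E by rewrite subrK l1_deg.
have Rex : exists k, exists p, inSigma L p /\ l1norm (p + D) = k.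
  by exists (deg E), (E - D).
have [hR1 hR2] := @intmin_spec _ Rex RHSge0.
have eqm : intmin P = R.
  apply/le_anti/andP; split.
  - move: hR1 => [p [hp hl]].
    pose E' : 'rV[int]_(n.+1) := \row_i Num.max ((p + D) ord0 i) 0.
    apply: le_trans (hP2 (deg E') _) _.
      exists E'; split=> //.
        by move=> i; rewrite !mxE le_max lexx orbT.
      move=> F [hF hL]; apply: (hp (- (D - E' - F))).
        exact: (@LN n L HL0 HLB _ hL).
      move=> i; rewrite !mxE; have := hF i; rewrite mxE => hFi.
      rewrite opprB opprB addrC.
      apply: (le_trans (y := Num.max (p ord0 i + D ord0 i) 0 - D ord0 i)).
        by rewrite lerBrDr le_max lexx.
      by rewrite [D ord0 i + _]addrC lerDr.
    rewrite (_ : R = l1norm (p + D)); last by rewrite hl.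
     apply: ler_sum => i _; rewrite mxE ge_max ler_norm normr_ge0.
    by [].
  - by apply: hR2; exists (E - D); split=> //; rewrite l1E hdeg.
rewrite /=; split; last by rewrite eqm.
split=> [h|hS]; last by exfalso; apply: Hne; apply/(Hes D).2.
exfalso; apply: Hne.
have m0 : intmin P = 0 by move: h => /eqP; rewrite -subr_eq0 opprK subrK => /eqP.
have E0 : E = 0.
  apply/matrixP => i j; rewrite (ord1 i) mxE.
  apply: (psumr_eq0P (P := xpredT) (F := fun j => E ord0 j)).
  - by move=> k _; have := hE k; rewrite mxE.
  - by rewrite -/(deg E) hdeg.
  - by [].
by move: hEe; rewrite E0 subr0.
Qed.
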